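(* Let $G_1$ and $G_2$ be connected bipartite graphs, where $G_i$ has bipartition $(A_i,B_i)$ with $|A_i|,|B_i|\ge 3$, and let $H_1,H_2$ be the graphs obtained from them by the construction described in the context. Then $G_1\simeq G_2$ if and only if $H_1\simeq H_2$.
   Context: All graphs are finite, simple, undirected; $\simeq$ denotes graph isomorphism. Construction: given a bipartite graph $G$ with bipartition $(A,B)$, the graph $H$ has vertex set $A\cup B\cup C$ where $C=\{c_e : e\in E(G)\}$ is a set of new vertices, one per edge of $G$; its edges are: all pairs $ab$ with $a\in A$, $b\in B$ (so $A\cup B$ induces the complete bipartite graph with parts $A,B$), and for each edge $e=ab$ of $G$ ($a\in A$, $b\in B$) the two edges $ac_e$ and $bc_e$. There are no other edges. *)

(* Defs.v *)
From mathcomp Require Import all_boot.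
Set Implicit Arguments. Unset Strict Implicit. Unset Printing Implicit Defensive.

Definition graph_iso (T1 T2 : finType) (e1 : rel T1) (e2 : rel T2) : Prop :=
  exists f : T1 -> T2, bijective f /\ forall x y, e2 (f x) (f y) = e1 x y.

(* A bipartite graph with bipartition (A,B) is given by the two parts as
   finite types and its edge relation r a b (a in A, b in B).
   Its underlying simple graph lives on A + B. *)
Definition bip_adj (A B : finType) (r : A -> B -> bool) : rel (A + B) :=
  fun u v => match u, v with
  | inl a, inr b => r a b
  | inr b, inl a => r a b
  | _, _ => false
  end.

Definition connected (T : finType) (e : rel T) : Prop :=
  forall x y : T, connect e x y.

(* Edge set of G, one new vertex c_e per edge e = ab *)
Definition edgeT (A B : finType) (r : A -> B -> bool) :=
  {p : A * B | r p.1 p.2}.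

Definition H_adj (A B : finType) (r : A -> B -> bool)
  : rel ((A + B) + edgeT r) :=
  fun u v => match u, v with
  | inl (inl _), inl (inr _) => true
  | inl (inr _), inl (inl _) => true
  | inl (inl a), inr c => (val c).1 == a
  | inr c, inl (inl a) => (val c).1 == a
  | inl (inr b), inr c => (val c).2 == b
  | inr c, inl (inr b) => (val c).2 == b
  | _, _ => false
  end.
Arguments H_adj {A B} r.
Arguments bip_adj {A B} r.

(* Main.v *)
Require Import Defs.
From mathcomp Require Import all_boot.
Set Implicit Arguments. Unset Strict Implicit. Unset Printing Implicit Defensive.


Lemma iso_inv (T1 T2 : finType) (e1 : rel T1) (e2 : rel T2) (f : T1 -> T2) g :
  cancel f g -> cancel g f ->
  (forall x y, e2 (f x) (f y) = e1 x y) -> forall x y, e1 (g x) (g y) = e2 x y.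
Proof. by move=> fK gK H x y; rewrite -H !gK. Qed.

Lemma iso_common (T1 T2 : finType) (e1 : rel T1) (e2 : rel T2) (f : T1 -> T2) g :
  cancel f g -> cancel g f ->
  (forall x y, e2 (f x) (f y) = e1 x y) -> forall x y,
  [exists z, e2 (f x) z && e2 (f y) z] = [exists z, e1 x z && e1 y z].
Proof.
move=> fK gK H x y; apply/existsP/existsP => [[z Hz]|[z Hz]].
- by exists (g z); rewrite -!H gK.
- by exists (f z); rewrite !H.
Qed.

Definition deg (T : finType) (e : rel T) x := #|[set y | e x y]|.

Lemma deg_iso (T1 T2 : finType) (e1 : rel T1) (e2 : rel T2) (f : T1 -> T2) g :
  cancel f g -> cancel g f ->
  (forall x y, e2 (f x) (f y) = e1 x y) -> forall x, deg e2 (f x) = deg e1 x.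
Proof.
move=> fK gK H x; rewrite /deg -(card_imset _ (can_inj fK)).
apply: eq_card => z; rewrite inE.
apply/idP/imsetP => [Hz|[y]].
  by exists (g z); rewrite ?inE ?gK // -H gK.
by rewrite inE => Hy ->; rewrite H.
Qed.

Definition isl (A B : Type) (u : A + B) := if u is inl _ then true else false.

Section H.
Variables (A B : finType) (r : A -> B -> bool).

Lemma H_adj_sym : symmetric (H_adj r).
Proof. by case=> [[a|b]|c] [[a'|b']|c'] //=; rewrite eq_sym. Qed.

Lemma H_adj_ll u v : H_adj r (inl u) (inl v) = (isl u != isl v).
Proof. by case: u; case: v. Qed.

Lemma H_nbr w c : H_adj r (inl w) (inr c) = (w == inl (val c).1) || (w == inr (val c).2).
Proof. by case: w => [a|b] /=; rewrite ?orbF eq_sym. Qed.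

Lemma bip_side u v : bip_adj r u v -> isl v = ~~ isl u.
Proof. by case: u; case: v. Qed.

Lemma edge_det c1 c2 :
  (forall w, H_adj r (inl w) (inr c1) = H_adj r (inl w) (inr c2)) -> c1 = c2.
Proof.
move=> H; have h1 := H (inl (val c1).1); have h2 := H (inr (val c1).2).
rewrite !H_nbr !eqxx /= in h1 h2.
move: c1 c2 h1 h2 {H} => [[a1 b1] p1] [[a2 b2] p2] /= /esym h1 /esym h2.
rewrite orbF in h1; rewrite /= in h2.
apply: val_inj => /=; by move/eqP: h1 => [->]; move/eqP: h2 => [->].
Qed.

Lemma deg_inr c : deg (H_adj r) (inr c) <= 2.
Proof.
rewrite /deg; apply: leq_trans (_ : #|[set inl (inl (val c).1); inl (inr (val c).2)]| <= 2).
  apply: subset_leq_card; apply/subsetP => y; rewrite !inE.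
  by case: y => // w; rewrite H_adj_sym H_nbr.
by rewrite cards2.
Qed.

Lemma deg_inl u : 3 <= #|A| -> 3 <= #|B| -> 3 <= deg (H_adj r) (inl u).
Proof.
move=> hA hB; rewrite /deg; case: u => [a|b].
- apply: leq_trans hB _.
  have inj : injective (fun b : B => (inl (inr b) : (A + B) + edgeT r)) by move=> x y [].
  rewrite -cardsT -(card_imset [set: B] inj).
  apply: subset_leq_card; apply/subsetP => y /imsetP [b _ ->]; by rewrite inE.
- apply: leq_trans hA _.
  have inj : injective (fun a : A => (inl (inl a) : (A + B) + edgeT r)) by move=> x y [].
  rewrite -cardsT -(card_imset [set: A] inj).
  apply: subset_leq_card; apply/subsetP => y /imsetP [a _ ->]; by rewrite inE.
Qed.

Lemma bip_char x y : bip_adj r x y =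
  H_adj r (inl x) (inl y) && [exists z, H_adj r (inl x) z && H_adj r (inl y) z].
Proof.
have key : forall a b, r a b =
   [exists z, H_adj r (inl (inl a)) z && H_adj r (inl (inr b)) z].
  move=> a b; apply/idP/existsP => [Hab|[z]].
    by exists (inr (exist _ (a, b) Hab)); rewrite /= !eqxx.
  case: z => [[w|w]|c] //=; move=> /andP [/eqP h1 /eqP h2].
  by have := valP c; rewrite h1 h2.
case: x => [a|b]; case: y => [a'|b'] /=; rewrite ?key //.
  by under eq_existsb do rewrite andbC.
Qed.

End H.

Section Back.
Variables (A1 B1 : finType) (r1 : A1 -> B1 -> bool).
Variables (A2 B2 : finType) (r2 : A2 -> B2 -> bool).

Lemma inl_pres (g : (A1 + B1) + edgeT r1 -> (A2 + B2) + edgeT r2) h :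
  cancel g h -> cancel h g -> (forall x y, H_adj r2 (g x) (g y) = H_adj r1 x y) ->
  3 <= #|A1| -> 3 <= #|B1| -> forall x, isl (g (inl x)).
Proof.
move=> gK hK Hg hA hB x; case E: (g (inl x)) => [y|c] //.
have := deg_iso gK hK Hg (inl x); rewrite E => Hd.
have := deg_inr c; have := deg_inl r1 x hA hB; rewrite -Hd.
by move=> h1 h2; have := leq_trans h1 h2.
Qed.

Definition fof (g : (A1 + B1) + edgeT r1 -> (A2 + B2) + edgeT r2) (x : A1 + B1) : A2 + B2 :=
  match g (inl x) with inl y => y | inr c => inl (val c).1 end.

Lemma fofE g x : isl (g (inl x)) -> g (inl x) = inl (fof g x).
Proof. by rewrite /fof; case: (g (inl x)). Qed.

End Back.

Lemma H_to_G (A1 B1 : finType) (r1 : A1 -> B1 -> bool)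
  (A2 B2 : finType) (r2 : A2 -> B2 -> bool)
  (g : (A1 + B1) + edgeT r1 -> (A2 + B2) + edgeT r2) h :
  cancel g h -> cancel h g -> (forall x y, H_adj r2 (g x) (g y) = H_adj r1 x y) ->
  3 <= #|A1| -> 3 <= #|B1| -> 3 <= #|A2| -> 3 <= #|B2| ->
  graph_iso (bip_adj r1) (bip_adj r2).
Proof.
move=> gK hK Hg hA1 hB1 hA2 hB2.
have Hh := iso_inv gK hK Hg.
have gE x := fofE (inl_pres gK hK Hg hA1 hB1 x).
have hE y := fofE (inl_pres hK gK Hh hA2 hB2 y).
exists (fof g); split.
  exists (fof h) => [x|y].
    by have := hE (fof g x); rewrite -gE gK => -[].
  by have := gE (fof h y); rewrite -hE hK => -[].
move=> x y; rewrite !bip_char -!gE Hg.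
by rewrite (iso_common gK hK Hg).
Qed.

Definition mkedge (A B : finType) (r : A -> B -> bool) (u v : A + B) : option (edgeT r) :=
  match u, v with
  | inl a, inr b => insub (a, b)
  | inr b, inl a => insub (a, b)
  | _, _ => None
  end.

Lemma mkedge_spec (A B : finType) (r : A -> B -> bool) u v : bip_adj r u v ->
  exists c, mkedge r u v = Some c /\
   forall w, (w == inl (val c).1) || (w == inr (val c).2) = (w == u) || (w == v).
Proof.
case: u => [a|b]; case: v => [a'|b'] //= H.
- case: insubP => [c Hc Ec|]; last by rewrite /= H.
  by exists c; split => // w; rewrite Ec.
- case: insubP => [c Hc Ec|]; last by rewrite /= H.
  by exists c; split => // w; rewrite Ec orbC.
Qed.

Section Fwd.
Variables (A1 B1 : finType) (r1 : A1 -> B1 -> bool).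
Variables (A2 B2 : finType) (r2 : A2 -> B2 -> bool).

Definition gmap (f : A1 + B1 -> A2 + B2) (v : (A1 + B1) + edgeT r1) : (A2 + B2) + edgeT r2 :=
  match v with
  | inl x => inl (f x)
  | inr c => match mkedge r2 (f (inl (val c).1)) (f (inr (val c).2)) with
             | Some c' => inr c'
             | None => inl (f (inl (val c).1))
             end
  end.

Lemma gmap_inl f x : gmap f (inl x) = inl (f x).
Proof. by []. Qed.

Lemma gmapE f : (forall x y, bip_adj r2 (f x) (f y) = bip_adj r1 x y) ->
  forall c, exists c', gmap f (inr c) = inr c' /\
   forall w, H_adj r2 (inl w) (inr c') = (w == f (inl (val c).1)) || (w == f (inr (val c).2)).
Proof.
move=> Hf c.
have Hb : bip_adj r2 (f (inl (val c).1)) (f (inr (val c).2)) by rewrite Hf /= (valP c).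
have [c' [E1 E2]] := mkedge_spec Hb.
by exists c'; split => [|w]; [rewrite /gmap E1 | rewrite H_nbr E2].
Qed.

Lemma eq_can (T1 T2 : eqType) (f : T1 -> T2) f' w z :
  cancel f f' -> cancel f' f -> (w == f' z) = (f w == z).
Proof. by move=> fK f'K; apply/eqP/eqP => [->|<-]; rewrite ?f'K ?fK. Qed.

Lemma gmap_iso f f' : cancel f f' -> cancel f' f ->
  (forall x y, bip_adj r2 (f x) (f y) = bip_adj r1 x y) ->
  connected (bip_adj r1) ->
  forall u v, H_adj r2 (gmap f u) (gmap f v) = H_adj r1 u v.
Proof.
move=> fK f'K Hf Hc.
have side x y : (isl (f x) == isl x) = (isl (f y) == isl y).
  have cl : closed (bip_adj r1) [pred z | isl (f z) == isl z].
    move=> u v Huv; rewrite !inE (bip_side Huv).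
    have Huv2 : bip_adj r2 (f u) (f v) by rewrite Hf.
    by rewrite (bip_side Huv2); case: (isl (f u)); case: (isl u).
  exact: (closed_connect cl (Hc x y)).
have lr x d : H_adj r2 (gmap f (inl x)) (gmap f (inr d)) = H_adj r1 (inl x) (inr d).
  have [d' [E N]] := gmapE Hf d.
  by rewrite E gmap_inl N H_nbr !(inj_eq (can_inj fK)).
case=> [x|c] [y|d].
- rewrite !gmap_inl !H_adj_ll; move: (side x y).
  by case: (isl (f x)); case: (isl x); case: (isl (f y)); case: (isl y).
- exact: lr.
- by rewrite H_adj_sym lr H_adj_sym.
- have [c' [E1 _]] := gmapE Hf c; have [d' [E2 _]] := gmapE Hf d.
  by rewrite E1 E2.
Qed.

End Fwd.

Lemma gmap_cancel (A1 B1 : finType) (r1 : A1 -> B1 -> bool)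
  (A2 B2 : finType) (r2 : A2 -> B2 -> bool) (f : A1 + B1 -> A2 + B2) f' :
  cancel f f' -> cancel f' f ->
  (forall x y, bip_adj r2 (f x) (f y) = bip_adj r1 x y) ->
  cancel (@gmap _ _ r1 _ _ r2 f) (@gmap _ _ r2 _ _ r1 f').
Proof.
move=> fK f'K Hf; have Hf' := iso_inv fK f'K Hf.
case=> [x|c]; first by rewrite !gmap_inl fK.
have [c' [E1 N1]] := gmapE Hf c; have [c'' [E2 N2]] := gmapE Hf' c'.
rewrite E1 E2; congr inr; apply: edge_det => w.
rewrite N2 !(eq_can _ _ fK f'K) -H_nbr N1 !(inj_eq (can_inj fK)).
by rewrite H_nbr.
Qed.

Theorem mainTheorem4
  (A1 B1 : finType) (r1 : A1 -> B1 -> bool)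
  (A2 B2 : finType) (r2 : A2 -> B2 -> bool) :
  connected (bip_adj r1) -> connected (bip_adj r2) ->
  3 <= #|A1| -> 3 <= #|B1| -> 3 <= #|A2| -> 3 <= #|B2| ->
  (graph_iso (bip_adj r1) (bip_adj r2) <-> graph_iso (H_adj r1) (H_adj r2)).
Proof.
move=> c1 c2 hA1 hB1 hA2 hB2; split.
- move=> [f [[f' fK f'K] Hf]]; have Hf' := iso_inv fK f'K Hf.
  exists (@gmap _ _ r1 _ _ r2 f); split; last exact: gmap_iso fK f'K Hf c1.
  exists (@gmap _ _ r2 _ _ r1 f'); first exact: gmap_cancel.
  exact: gmap_cancel.
- move=> [g [[h gK hK] Hg]].
  exact: H_to_G gK hK Hg hA1 hB1 hA2 hB2.
Qed.
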